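(* Let $A,B,C$ share a tripartite quantum state $\rho$ and let each party have two dichotomic observables $A_1,A_2$, $B_1,B_2$, $C_1,C_2$ with eigenvalues $\pm1$. For $\alpha\ge1$ define $$\widetilde{I}^{\alpha}_{AB}=\alpha(\langle A_1B_1\rangle+\langle A_1B_2\rangle)+\langle A_2B_1\rangle-\langle A_2B_2\rangle,$$ and $\widetilde{I}^{\alpha}_{AC}$ analogously with $B$ replaced by $C$, where $\langle XY\rangle=\mathrm{Tr}[\rho\,(X\otimes Y)]$ (identity on the remaining party). Then for every $\alpha\ge1$, $$\alpha^2\max\{(\widetilde{I}^{\alpha}_{AB})^2,(\widetilde{I}^{\alpha}_{AC})^2\}+\min\{(\widetilde{I}^{\alpha}_{AB})^2,(\widetilde{I}^{\alpha}_{AC})^2\}\le 4\alpha^2(1+\alpha^2)$$ and $$(\widetilde{I}^{\alpha}_{AB})^2+4\langle A_iC_j\rangle^2\le 4(1+\alpha^2)\quad\text{for all } i,j\in\{1,2\}.$$ *)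

(* Defs.v *)
(* finite-dimensional quantum mechanics over a numeric closed
   field C (e.g. the complex numbers). *)
From HB Require Import structures.
From mathcomp Require Import all_boot all_order all_algebra.
From mathcomp Require Import mxtens.

Set Implicit Arguments.
Unset Strict Implicit.
Unset Printing Implicit Defensive.

Import Order.TTheory GRing.Theory Num.Theory.
Local Open Scope ring_scope.

Definition adjmx (C : numClosedFieldType) m n (M : 'M[C]_(m, n)) : 'M[C]_(n, m) :=
  map_mx Num.conj (trmx M).

Definition hermitian (C : numClosedFieldType) n (M : 'M[C]_n) : Prop :=
  adjmx M = M.

Definition psd (C : numClosedFieldType) n (M : 'M[C]_n) : Prop :=
  forall v : 'cV[C]_n, 0 <= (adjmx v *m M *m v) 0 0.

Definition density (C : numClosedFieldType) n (rho : 'M[C]_n) : Prop :=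
  [/\ hermitian rho, psd rho & \tr rho = 1].

Definition dichotomic (C : numClosedFieldType) n (X : 'M[C]_n) : Prop :=
  hermitian X /\ (forall a : C, eigenvalue X a -> a = 1 \/ a = -1).

(* tripartite Hilbert space ordered A (x) B (x) C *)
Definition corrAB (C : numClosedFieldType) dA dB dC
  (rho : 'M[C]_(dA * dB * dC)) (X : 'M[C]_dA) (Y : 'M[C]_dB) : C :=
  \tr (rho *m ((X *t Y) *t (1%:M : 'M[C]_dC))).

Definition corrAC (C : numClosedFieldType) dA dB dC
  (rho : 'M[C]_(dA * dB * dC)) (X : 'M[C]_dA) (Z : 'M[C]_dC) : C :=
  \tr (rho *m ((X *t (1%:M : 'M[C]_dB)) *t Z)).

Definition Itilde (C : numClosedFieldType) (alpha e11 e12 e21 e22 : C) : C :=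
  alpha * (e11 + e12) + e21 - e22.

(* Main.v *)
Require Import Defs.
From HB Require Import structures.
From mathcomp Require Import all_boot all_order all_algebra.
From mathcomp Require Import mxtens.
From mathcomp Require Import spectral sesquilinear ring.
Import Order.TTheory GRing.Theory Num.Theory.
Local Open Scope ring_scope.

Section Adj.
Variable C : numClosedFieldType.

Lemma adjmxD m n (A B : 'M[C]_(m, n)) : adjmx (A + B) = adjmx A + adjmx B.
Proof. by apply/matrixP=> i j; rewrite !mxE rmorphD. Qed.

Lemma adjmxN m n (A : 'M[C]_(m, n)) : adjmx (- A) = - adjmx A.
Proof. by apply/matrixP=> i j; rewrite !mxE rmorphN. Qed.

Lemma adjmxZ m n (k : C) (A : 'M[C]_(m, n)) : adjmx (k *: A) = k^* *: adjmx A.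
Proof. by apply/matrixP=> i j; rewrite !mxE rmorphM. Qed.

Lemma adjmxM m n p (A : 'M[C]_(m, n)) (B : 'M[C]_(n, p)) :
  adjmx (A *m B) = adjmx B *m adjmx A.
Proof. by rewrite /adjmx trmx_mul map_mxM. Qed.

Lemma adjmxK m n (A : 'M[C]_(m, n)) : adjmx (adjmx A) = A.
Proof. by apply/matrixP=> i j; rewrite !mxE conjCK. Qed.

Lemma adjmx1 n : adjmx (1%:M : 'M[C]_n) = 1%:M.
Proof. by rewrite /adjmx trmx1 map_mx1. Qed.

Lemma adjmx_tens m n p q (A : 'M[C]_(m, n)) (B : 'M[C]_(p, q)) :
  adjmx (A *t B) = adjmx A *t adjmx B.
Proof. by rewrite /adjmx trmx_tens map_mxT. Qed.

Lemma tr_adj n (A : 'M[C]_n) : (\tr A)^* = \tr (adjmx A).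
Proof. rewrite /mxtrace rmorph_sum; apply: eq_bigr => i _; by rewrite !mxE. Qed.

Lemma tens11 m n : (1%:M : 'M[C]_m) *t (1%:M : 'M[C]_n) = 1%:M.
Proof.
apply/matrixP=> i j.
case: (mxtens_indexP i)=> i0 i1; case: (mxtens_indexP j)=> j0 j1.
rewrite tensmxE !mxE.
have inj := can_inj (@mxtens_indexK m n).
case: (i0 =P j0) => [->|ne0]; case: (i1 =P j1) => [->|ne1];
  rewrite ?eqxx ?mulr1 ?mulr0 ?mul0r //.
- by case: eqP => // /inj [].
- by case: eqP => // /inj [].
- by case: eqP => // /inj [].
Qed.

Lemma tensmxDl m n p q (A B : 'M[C]_(m, n)) (D : 'M[C]_(p, q)) :
  (A + B) *t D = A *t D + B *t D.
Proof. by apply/matrixP=> i j; rewrite !mxE mulrDl. Qed.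

Lemma tensmxDr m n p q (A : 'M[C]_(m, n)) (B D : 'M[C]_(p, q)) :
  A *t (B + D) = A *t B + A *t D.
Proof. by apply/matrixP=> i j; rewrite !mxE mulrDr. Qed.

Lemma tensmxNl m n p q (A : 'M[C]_(m, n)) (D : 'M[C]_(p, q)) :
  (- A) *t D = - (A *t D).
Proof. by apply/matrixP=> i j; rewrite !mxE mulNr. Qed.

Lemma tensmxNr m n p q (A : 'M[C]_(m, n)) (D : 'M[C]_(p, q)) :
  A *t (- D) = - (A *t D).
Proof. by apply/matrixP=> i j; rewrite !mxE mulrN. Qed.

Lemma hermitian_adj n (X : 'M[C]_n) : Defs.hermitian X -> adjmx X = X.
Proof. by []. Qed.

End Adj.

Section Dsq.
Local Open Scope sesquilinear_scope.
Lemma dichotomic_sq (C : numClosedFieldType) n (X : 'M[C]_n) :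
  dichotomic X -> X *m X = 1%:M.
Proof.
case=> herm eig.
have nX : X \is normalmx.
  by apply/normalmxP; rewrite -[X^t*]/(adjmx X) herm.
have eX := orthomx_spectralP nX.
set U := spectralmx X in eX; set d := spectral_diag X in eX.
have Uu : U \in unitmx by apply: spectral_unit.
have d2 : forall i, d 0 i * d 0 i = 1.
  move=> i.
  have : eigenvalue X (d 0 i).
    apply/eigenvalueP; exists ('e_i *m U).
      by rewrite {1}eX !mulmxA mulmxK // -[in LHS]rowE row_diag_mx -scalemxAl.
    rewrite mulmx_free_eq0 ?row_free_unit //.
    apply/eqP => /matrixP/(_ 0 i); rewrite !mxE !eqxx /= => /eqP.
    by rewrite oner_eq0.
  by case/eig => ->; rewrite ?mulr1 ?mulrNN ?mulr1.
have DD : diag_mx d *m diag_mx d = 1%:M.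
  apply/matrixP=> i j; rewrite mul_diag_mx !mxE.
  by case: eqP => [->|_]; rewrite ?mulr1n ?mulr0n ?mulr0 ?d2.
rewrite eX -!mulmxA (mulmxA U) mulmxV // mul1mx (mulmxA (diag_mx d)) DD mul1mx.
by rewrite mulVmx.
Qed.
End Dsq.


Section Expect.
Variable C : numClosedFieldType.
Variable N : nat.
Variable rho : 'M[C]_N.
Hypothesis dens : density rho.

Definition Ex (X : 'M[C]_N) := \tr (rho *m X).

Lemma ExD X Y : Ex (X + Y) = Ex X + Ex Y.
Proof. by rewrite /Ex mulmxDr mxtraceD. Qed.
Lemma ExN X : Ex (- X) = - Ex X.
Proof. by rewrite /Ex mulmxN linearN. Qed.
Lemma ExB X Y : Ex (X - Y) = Ex X - Ex Y.
Proof. by rewrite ExD ExN. Qed.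
Lemma ExZ k X : Ex (k *: X) = k * Ex X.
Proof. by rewrite /Ex -scalemxAr mxtraceZ. Qed.
Lemma Ex0 : Ex 0 = 0.
Proof. by rewrite /Ex mulmx0 mxtrace0. Qed.
Lemma Ex1 : Ex 1%:M = 1.
Proof. by case: dens => _ _ tr1; rewrite /Ex mulmx1. Qed.

Lemma Ex_conj X : (Ex X)^* = Ex (adjmx X).
Proof.
case: dens => hr _ _.
by rewrite /Ex tr_adj adjmxM hr mxtrace_mulC.
Qed.

Lemma Ex_real X : adjmx X = X -> Ex X \is Num.real.
Proof. by move=> hX; apply/CrealP; rewrite Ex_conj hX. Qed.

Lemma Ex_psd (X : 'M[C]_N) : 0 <= Ex (adjmx X *m X).
Proof.
case: dens => _ ps _.
rewrite /Ex mulmxA mxtrace_mulC mulmxA /mxtrace.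
apply: sumr_ge0 => i _.
have -> : (X *m rho *m adjmx X) i i =
  (adjmx (adjmx (row i X)) *m rho *m adjmx (row i X)) 0 0.
  rewrite adjmxK !mxE; apply: eq_bigr => k _.
  rewrite !mxE; congr (_ * _).
  by apply: eq_bigr => l _; rewrite !mxE.
exact: ps.
Qed.

Lemma Ex_var Z : adjmx Z = Z -> (Ex Z) ^+ 2 <= Ex (Z *m Z).
Proof.
move=> hZ; set e := Ex Z.
have er : e \is Num.real by apply: Ex_real.
have := Ex_psd (Z - e *: 1%:M).
rewrite adjmxD adjmxN adjmxZ adjmx1 hZ (conj_Creal er).
rewrite mulmxDl !mulmxDr !ExD !mulNmx !mulmxN !ExN.
rewrite -!scalemxAl -!scalemxAr !ExZ !mul1mx !mulmx1 Ex1 -/e.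
move=> h; rewrite -subr_ge0; apply: le_trans h _; rewrite le_eqVlt; apply/orP; left; apply/eqP; ring.
Qed.

End Expect.

Section Key.
Variable C : numClosedFieldType.
Variable N : nat.
Variable rho : 'M[C]_N.
Hypothesis dens : density rho.
Variables a1 a2 P M G1 G2 : 'M[C]_N.
Hypotheses (ha1 : adjmx a1 = a1) (ha2 : adjmx a2 = a2) (hP : adjmx P = P)
  (hM : adjmx M = M) (hG1 : adjmx G1 = G1) (hG2 : adjmx G2 = G2).
Hypotheses (a11 : a1 *m a1 = 1%:M) (a22 : a2 *m a2 = 1%:M).
Hypotheses (Pa1 : P *m a1 = a1 *m P) (Pa2 : P *m a2 = a2 *m P)
  (Ma1 : M *m a1 = a1 *m M) (Ma2 : M *m a2 = a2 *m M)
  (G1a1 : G1 *m a1 = a1 *m G1) (G1a2 : G1 *m a2 = a2 *m G1)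
  (G2a1 : G2 *m a1 = a1 *m G2) (G2a2 : G2 *m a2 = a2 *m G2).
Hypotheses (MP : M *m P = - (P *m M)) (G21 : G2 *m G1 = - (G1 *m G2)).
Hypotheses (G1P : G1 *m P = P *m G1) (G1M : G1 *m M = M *m G1)
  (G2P : G2 *m P = P *m G2) (G2M : G2 *m M = M *m G2).
Variable p : C.
Hypothesis p1 : 1 <= p.
Local Notation E := (@Ex C N rho).

Let cY (X A : 'M[C]_N) : X *m A = A *m X -> forall Y : 'M[C]_N, X *m (A *m Y) = A *m (X *m Y).
Proof. by move=> h Y; rewrite mulmxA h -mulmxA. Qed.
Let aY (X Y A : 'M[C]_N) : X *m A = - (A *m X) -> X *m (A *m Y) = - (A *m (X *m Y)).
Proof. by move=> h; rewrite mulmxA h mulNmx -mulmxA. Qed.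
Let sY (A : 'M[C]_N) : A *m A = 1%:M -> forall Y : 'M[C]_N, A *m (A *m Y) = Y.
Proof. by move=> h Y; rewrite mulmxA h mul1mx. Qed.

Let Pa1Y := cY _ _ Pa1. Let Pa2Y := cY _ _ Pa2. Let Ma1Y := cY _ _ Ma1. Let Ma2Y := cY _ _ Ma2.
Let G1a1Y := cY _ _ G1a1. Let G1a2Y := cY _ _ G1a2. Let G2a1Y := cY _ _ G2a1. Let G2a2Y := cY _ _ G2a2.
Let G1PY := cY _ _ G1P. Let G1MY := cY _ _ G1M. Let G2PY := cY _ _ G2P. Let G2MY := cY _ _ G2M.
Let MPY := fun Y : 'M[C]_N => aY _ Y _ MP. Let G21Y := fun Y : 'M[C]_N => aY _ Y _ G21.
Let a11Y := sY _ a11. Let a22Y := sY _ a22.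

Ltac norm := repeat progress rewrite ?(mulmxDl, mulmxDr, mulNmx, mulmxN, opprK,
   scalerDr, scalerN, scalerA, mul1mx, mulmx1, scaleNr) -?(scalemxAl, scalemxAr, mulmxA)
   ?(Pa1, Pa2, Ma1, Ma2, G1a1, G1a2, G2a1, G2a2, G1P, G1M, G2P, G2M, MP, G21, a11, a22)
   ?(Pa1Y, Pa2Y, Ma1Y, Ma2Y, G1a1Y, G1a2Y, G2a1Y, G2a2Y, G1PY, G1MY, G2PY, G2MY, MPY, G21Y, a11Y, a22Y).

Ltac realt pr := repeat first [ exact: pr | exact: rpred1 | exact: rpred_nat | apply: rpredM | apply: rpredV | apply: rpredB | apply: rpredD | apply: rpredX | apply: rpredN | rewrite realV ].

Lemma preal : p \is Num.real.
Proof. exact: ger1_real p1. Qed.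

Lemma key_identity :
  let q := p^-1 in
  let u := a1 *m a2 in let v := a2 *m a1 in
  let zeta := (2^-1 * (p - q)) *: u - (2^-1 * (p + q)) *: v in
  let omega := (2^-1 * (p - q)) *: u + (2^-1 * (p + q)) *: v in
  let Q := - P + zeta *m M + p ^+ 2 *: G1 + omega *m G2 in
  let Z := p *: (a1 *m (P + G1)) + a2 *m (M + G2) in
  let kappa := 4^-1 * (p ^+ 2 - q ^+ 2) in
  E (Z *m Z) + E (adjmx Q *m Q)
  + kappa * E (adjmx ((u + v) *m M) *m ((u + v) *m M))
  + kappa * E (adjmx ((u - v) *m G2) *m ((u - v) *m G2))
  = (1 + p ^+ 2) * (E (P *m P) + E (M *m M))
    + (1 + p ^+ 2) * (p ^+ 2 * E (G1 *m G1) + E (G2 *m G2)).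
Proof.
move=> q u v zeta omega Q Z kappa.
have pr := preal.
have p0 : p != 0 by rewrite gt_eqF // (lt_le_trans ltr01 p1).
rewrite /Q /zeta /omega /u /v /Z /kappa /q.
have rs : forall k : C, k \is Num.real -> forall A : 'M[C]_N, adjmx (k *: A) = k *: adjmx A.
  by move=> k kr A; rewrite adjmxZ conj_Creal.
have r1 : 2^-1 * (p - p^-1) \is Num.real by realt pr.
have r2 : 2^-1 * (p + p^-1) \is Num.real by realt pr.
have r3 : p ^+ 2 \is Num.real by realt pr.
rewrite !(adjmxD, adjmxN, adjmxM, rs _ r1, rs _ r2, rs _ r3, ha1, ha2, hP, hM, hG1, hG2).
rewrite !(mulmxDl, mulmxDr).
rewrite !(mulNmx, mulmxN, opprK).
rewrite -!(scalemxAl, scalemxAr).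
rewrite -!mulmxA.
do 6 rewrite ?(Pa1, Pa2, Ma1, Ma2, G1a1, G1a2, G2a1, G2a2, G1P, G1M, G2P, G2M, MP, G21, a11, a22)
   ?(Pa1Y, Pa2Y, Ma1Y, Ma2Y, G1a1Y, G1a2Y, G2a1Y, G2a2Y, G1PY, G1MY, G2PY, G2MY, MPY, G21Y, a11Y, a22Y)
   ?(mulNmx, mulmxN, opprK, mul1mx, mulmx1, scalerN, scaleNr, mulmxDl, mulmxDr) -?mulmxA.
rewrite !(ExD, ExN, ExZ).
field.
all: exact: p0.
Qed.

Lemma kappa_ge0 : 0 <= 4^-1 * (p ^+ 2 - p^-1 ^+ 2).
Proof.
have p0 : 0 < p by apply: lt_le_trans ltr01 p1.
apply: mulr_ge0; first by rewrite invr_ge0 ler0n.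
rewrite subr_ge0; apply: (@le_trans _ _ 1).
  apply: exprn_ile1; first by rewrite invr_ge0 ltW.
  by rewrite invf_le1.
exact: exprn_ege1.
Qed.

Lemma key_ineq :
  (E (p *: (a1 *m (P + G1)) + a2 *m (M + G2))) ^+ 2 <= (1 + p ^+ 2) * (E (P *m P) + E (M *m M))
    + (1 + p ^+ 2) * (p ^+ 2 * E (G1 *m G1) + E (G2 *m G2)).
Proof.
set Z := p *: (a1 *m (P + G1)) + a2 *m (M + G2).
have hZ : adjmx Z = Z.
  rewrite /Z adjmxD adjmxZ (conj_Creal preal) !adjmxM !adjmxD ha1 ha2 hP hM hG1 hG2.
  by rewrite !mulmxDl Pa1 G1a1 Ma2 G2a2 !mulmxDr.
apply: le_trans (@Ex_var C N rho dens Z hZ) _.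
have := key_identity; rewrite /= -/Z => <-.
rewrite -addrA -addrA lerDl.
apply: addr_ge0; first exact: (@Ex_psd C N rho dens).
apply: addr_ge0; apply: mulr_ge0; (exact: kappa_ge0 || exact: (@Ex_psd C N rho dens)).
Qed.

End Key.

Section Mono.
Variable C : numClosedFieldType.
Variable N : nat.
Variable rho : 'M[C]_N.
Hypothesis dens : density rho.
Local Notation E := (@Ex C N rho).
Local Notation cm X Y := (X *m Y = Y *m X).

Lemma cmZl k (X Y : 'M[C]_N) : cm X Y -> cm (k *: X) Y.
Proof. by move=> h; rewrite -scalemxAl h scalemxAr. Qed.
Lemma cmZr k (X Y : 'M[C]_N) : cm X Y -> cm X (k *: Y).
Proof. by move=> h; rewrite -scalemxAr h scalemxAl. Qed.
Lemma cmDl (X1 X2 Y : 'M[C]_N) : cm X1 Y -> cm X2 Y -> cm (X1 + X2) Y.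
Proof. by move=> h1 h2; rewrite mulmxDl mulmxDr h1 h2. Qed.
Lemma cmDr (X Y1 Y2 : 'M[C]_N) : cm X Y1 -> cm X Y2 -> cm X (Y1 + Y2).
Proof. by move=> h1 h2; rewrite mulmxDl mulmxDr h1 h2. Qed.
Lemma cmNl (X Y : 'M[C]_N) : cm X Y -> cm (- X) Y.
Proof. by move=> h; rewrite mulNmx mulmxN h. Qed.
Lemma cmNr (X Y : 'M[C]_N) : cm X Y -> cm X (- Y).
Proof. by move=> h; rewrite mulNmx mulmxN h. Qed.
Lemma cm0l (Y : 'M[C]_N) : cm 0 Y.
Proof. by rewrite mul0mx mulmx0. Qed.
Lemma cm0r (Y : 'M[C]_N) : cm Y 0.
Proof. by rewrite mul0mx mulmx0. Qed.
Lemma cmsym (X Y : 'M[C]_N) : cm X Y -> cm Y X.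
Proof. by move=> ->. Qed.

Lemma hermZ k (X : 'M[C]_N) : k \is Num.real -> adjmx X = X -> adjmx (k *: X) = k *: X.
Proof. by move=> kr h; rewrite adjmxZ conj_Creal // h. Qed.
Lemma hermD (X Y : 'M[C]_N) : adjmx X = X -> adjmx Y = Y -> adjmx (X + Y) = X + Y.
Proof. by move=> h1 h2; rewrite adjmxD h1 h2. Qed.
Lemma hermN (X : 'M[C]_N) : adjmx X = X -> adjmx (- X) = - X.
Proof. by move=> h1; rewrite adjmxN h1. Qed.
Lemma herm0 : adjmx (0 : 'M[C]_N) = 0.
Proof. by apply/matrixP=> i j; rewrite !mxE rmorph0. Qed.
Lemma hermM (X Y : 'M[C]_N) : adjmx X = X -> adjmx Y = Y -> cm X Y -> adjmx (X *m Y) = X *m Y.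
Proof. by move=> h1 h2 h; rewrite adjmxM h1 h2 h. Qed.

Lemma anti (k : C) (x1 x2 : 'M[C]_N) : x1 *m x1 = 1%:M -> x2 *m x2 = 1%:M ->
  (k *: (x1 - x2)) *m (k *: (x1 + x2)) = - ((k *: (x1 + x2)) *m (k *: (x1 - x2))).
Proof.
move=> h1 h2.
have e1 : (x1 - x2) *m (x1 + x2) = x1 *m x2 - x2 *m x1.
  by rewrite mulmxBl !mulmxDr h1 h2 [x2 *m x1 + _]addrC opprD addrACA subrr add0r.
have e2 : (x1 + x2) *m (x1 - x2) = x2 *m x1 - x1 *m x2.
  by rewrite mulmxDl !mulmxBr h1 h2 addrC addrA subrK.
by rewrite -!scalemxAl -!scalemxAr !scalerA e1 e2 -scalerN opprB.
Qed.

Lemma anti0l (X : 'M[C]_N) : X *m 0 = - (0 *m X).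
Proof. by rewrite mul0mx mulmx0 oppr0. Qed.
Lemma anti0r (X : 'M[C]_N) : 0 *m X = - (X *m 0).
Proof. by rewrite mul0mx mulmx0 oppr0. Qed.

Lemma Esq (k : C) (x1 x2 : 'M[C]_N) : x1 *m x1 = 1%:M -> x2 *m x2 = 1%:M ->
  E ((k *: (x1 + x2)) *m (k *: (x1 + x2))) + E ((k *: (x1 - x2)) *m (k *: (x1 - x2)))
  = 4 * k ^+ 2.
Proof.
move=> h1 h2.
rewrite -!scalemxAl -!scalemxAr !(mulmxDl, mulmxDr, mulNmx, mulmxN) h1 h2.
rewrite !(ExZ, ExD, ExN) (@Ex1 C N rho dens); ring.
Qed.

End Mono.

Lemma sq_le (C : numClosedFieldType) (X K : C) : 0 <= X -> 0 <= K -> X ^+ 2 <= K * X -> X <= K.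
Proof.
move=> X0 K0 h; have [->|nz] := eqVneq X 0; first by [].
have Xp : 0 < X by rewrite lt_def nz X0.
by move: h; rewrite expr2 ler_pM2r.
Qed.

Ltac realt2 pr := repeat first [ exact: pr | exact: rpred1 | exact: rpred_nat | apply: rpredM | apply: rpredV | apply: rpredB | apply: rpredD | apply: rpredX | apply: rpredN | rewrite realV ].

Section Gen.
Variable C : numClosedFieldType.
Variable N : nat.
Variable rho : 'M[C]_N.
Hypothesis dens : density rho.
Local Notation E := (@Ex C N rho).
Local Notation cm X Y := (X *m Y = Y *m X).
Variables a1 a2 x1 x2 y1 y2 : 'M[C]_N.
Hypotheses (ha1 : adjmx a1 = a1) (ha2 : adjmx a2 = a2) (hx1 : adjmx x1 = x1)
  (hx2 : adjmx x2 = x2) (hy1 : adjmx y1 = y1) (hy2 : adjmx y2 = y2).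
Hypotheses (sa1 : a1 *m a1 = 1%:M) (sa2 : a2 *m a2 = 1%:M) (sx1 : x1 *m x1 = 1%:M)
  (sx2 : x2 *m x2 = 1%:M) (sy1 : y1 *m y1 = 1%:M) (sy2 : y2 *m y2 = 1%:M).
Hypotheses (c11 : cm x1 a1) (c12 : cm x1 a2) (c21 : cm x2 a1) (c22 : cm x2 a2)
  (d11 : cm y1 a1) (d12 : cm y1 a2) (d21 : cm y2 a1) (d22 : cm y2 a2)
  (e11 : cm y1 x1) (e12 : cm y1 x2) (e21 : cm y2 x1) (e22 : cm y2 x2).

Definition Ival (p : C) (b1 b2 : 'M[C]_N) :=
  p * (E (a1 *m b1) + E (a1 *m b2)) + E (a2 *m b1) - E (a2 *m b2).

Lemma Ival_real p b1 b2 : p \is Num.real -> adjmx b1 = b1 -> adjmx b2 = b2 ->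
  cm b1 a1 -> cm b2 a1 -> cm b1 a2 -> cm b2 a2 -> Ival p b1 b2 \is Num.real.
Proof.
move=> pr h1 h2 q1 q2 q3 q4.
have R : forall a b, adjmx a = a -> adjmx b = b -> cm b a -> E (a *m b) \is Num.real.
  by move=> a b ha hb hab; apply: (@Ex_real C N rho dens); rewrite adjmxM ha hb.
rewrite /Ival; apply: rpredB; first apply: rpredD; first apply: rpredM => //; first apply: rpredD.
all: by apply: R.
Qed.

Ltac cmt := repeat first [ assumption | apply: cmZl | apply: cmZr | apply: cmDl | apply: cmDr
  | apply: cmNl | apply: cmNr | apply: cm0l | apply: cm0r | (apply: cmsym; assumption) ].

Lemma gen_bound (p : C) (p1 : 1 <= p) :
  p ^+ 2 * (Ival p x1 x2) ^+ 2 + (Ival p y1 y2) ^+ 2 <= 4 * p ^+ 2 * (1 + p ^+ 2).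
Proof.
have pr : p \is Num.real by exact: ger1_real.
have Ixr : Ival p x1 x2 \is Num.real by apply: Ival_real; cmt.
have Iyr : Ival p y1 y2 \is Num.real by apply: Ival_real; cmt.
set Ix := Ival p x1 x2; set Iy := Ival p y1 y2.
set c := p ^+ 2 * Ix; set d := Iy.
have cr : c \is Num.real by apply: rpredM => //; apply: rpredX.
have dr : d \is Num.real by [].
set P := c *: (x1 + x2); set M := c *: (x1 - x2).
set G1 := d *: (y1 + y2); set G2 := d *: (y1 - y2).
have hP : adjmx P = P by apply: hermZ => //; apply: hermD => //; apply: hermN.
have hM : adjmx M = M by apply: hermZ => //; apply: hermD => //; apply: hermN.
have hG1 : adjmx G1 = G1 by apply: hermZ => //; apply: hermD => //; apply: hermN.
have hG2 : adjmx G2 = G2 by apply: hermZ => //; apply: hermD => //; apply: hermN.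
have K := @key_ineq C N rho dens a1 a2 P M G1 G2 ha1 ha2 hP hM hG1 hG2 sa1 sa2
  ltac:(cmt) ltac:(cmt) ltac:(cmt) ltac:(cmt) ltac:(cmt) ltac:(cmt) ltac:(cmt) ltac:(cmt)
  (@anti C N c _ _ sx1 sx2) (@anti C N d _ _ sy1 sy2) ltac:(cmt) ltac:(cmt) ltac:(cmt) ltac:(cmt) p p1.
have EZ : E (p *: (a1 *m (P + G1)) + a2 *m (M + G2)) = p ^+ 2 * Ix ^+ 2 + Iy ^+ 2.
  rewrite /P /M /G1 /G2 /c /d /Ix /Iy /Ival.
  rewrite !(mulmxDr, mulmxN, ExD, ExN, ExZ, scalerDr, scalerN) -!scalemxAr !(ExD, ExN, ExZ).
  ring.
have ES1 := @Esq C N rho dens c _ _ sx1 sx2.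
have ES2 := @Esq C N rho dens d _ _ sy1 sy2.
rewrite -/P -/M in ES1; rewrite -/G1 -/G2 in ES2.
have G2pos : 0 <= E (G2 *m G2).
  by have := @Ex_psd C N rho dens G2; rewrite hG2.
have p2 : 1 <= p ^+ 2 by exact: exprn_ege1.
have Xge0 : 0 <= p ^+ 2 * Ix ^+ 2 + Iy ^+ 2.
  apply: addr_ge0; last by rewrite -realEsqr.
  by apply: mulr_ge0; [exact: le_trans ler01 p2 | rewrite -realEsqr].
apply: sq_le => //.
  by apply: mulr_ge0; [apply: mulr_ge0 => //; exact: le_trans ler01 p2 | apply: addr_ge0 => //; exact: le_trans ler01 p2].
rewrite -EZ; apply: le_trans K _.
rewrite ES1 EZ.
have H1 : p ^+ 2 * E (G1 *m G1) + E (G2 *m G2) <= p ^+ 2 * (E (G1 *m G1) + E (G2 *m G2)).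
  by rewrite mulrDr lerD2l; apply: ler_peMl.
apply: le_trans (_ : (1 + p ^+ 2) * (4 * c ^+ 2) + (1 + p ^+ 2) * (p ^+ 2 * (E (G1 *m G1) + E (G2 *m G2))) <= _).
  rewrite lerD2l; apply: ler_wpM2l => //.
  by apply: addr_ge0 => //; exact: le_trans ler01 p2.
rewrite ES2 /c /d; rewrite le_eqVlt; apply/orP; left; apply/eqP; ring.
Qed.

End Gen.

Section Ibound.
Variable C : numClosedFieldType.
Variable N : nat.
Variable rho : 'M[C]_N.
Hypothesis dens : density rho.
Local Notation E := (@Ex C N rho).
Local Notation cm X Y := (X *m Y = Y *m X).
Variables a1 a2 x1 x2 g : 'M[C]_N.
Hypotheses (ha1 : adjmx a1 = a1) (ha2 : adjmx a2 = a2) (hx1 : adjmx x1 = x1)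
  (hx2 : adjmx x2 = x2) (hg : adjmx g = g).
Hypotheses (sa1 : a1 *m a1 = 1%:M) (sa2 : a2 *m a2 = 1%:M) (sx1 : x1 *m x1 = 1%:M)
  (sx2 : x2 *m x2 = 1%:M) (sg : g *m g = 1%:M).
Hypotheses (c11 : cm x1 a1) (c12 : cm x1 a2) (c21 : cm x2 a1) (c22 : cm x2 a2)
  (d1 : cm g a1) (d2 : cm g a2) (e1 : cm g x1) (e2 : cm g x2).

Ltac cmt := repeat first [ assumption | apply: cmZl | apply: cmZr | apply: cmDl | apply: cmDr
  | apply: cmNl | apply: cmNr | apply: cm0l | apply: cm0r | (apply: cmsym; assumption) ].

Local Notation Iv p := (@Ival C N rho a1 a2 p x1 x2).

Lemma i1_bound (p : C) (p1 : 1 <= p) :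
  (Iv p) ^+ 2 + 4 * (E (a1 *m g)) ^+ 2 <= 4 * (1 + p ^+ 2).
Proof.
have pr : p \is Num.real by exact: ger1_real.
have p0 : p != 0 by rewrite gt_eqF // (lt_le_trans ltr01 p1).
have Ixr : Iv p \is Num.real by apply: Ival_real; cmt.
have mr : E (a1 *m g) \is Num.real.
  by apply: (@Ex_real C N rho dens); rewrite adjmxM hg ha1.
set Ix := Iv p; set m := E (a1 *m g).
set c := Ix.
set P := c *: (x1 + x2); set M := c *: (x1 - x2).
set t := 4 * m / p.
have tr : t \is Num.real by rewrite /t; realt2 pr; exact: mr.
set G1 := t *: g; set G2 := (0 : 'M[C]_N).
have hP : adjmx P = P by apply: hermZ => //; apply: hermD => //; apply: hermN.
have hM : adjmx M = M by apply: hermZ => //; apply: hermD => //; apply: hermN.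
have hG1 : adjmx G1 = G1 by apply: hermZ.
have hG2 : adjmx G2 = G2 by apply: herm0.
have K := @key_ineq C N rho dens a1 a2 P M G1 G2 ha1 ha2 hP hM hG1 hG2 sa1 sa2
  ltac:(cmt) ltac:(cmt) ltac:(cmt) ltac:(cmt) ltac:(cmt) ltac:(cmt) ltac:(cmt) ltac:(cmt)
  (@anti C N c _ _ sx1 sx2) (@anti0r C N G1) ltac:(cmt) ltac:(cmt) ltac:(cmt) ltac:(cmt) p p1.
have EZ : E (p *: (a1 *m (P + G1)) + a2 *m (M + G2)) = Ix ^+ 2 + 4 * m ^+ 2.
  rewrite /P /M /G1 /G2 /c /t /Ix /m /Ival addr0.
  rewrite !(mulmxDr, mulmxN, ExD, ExN, ExZ, scalerDr, scalerN) -!scalemxAr !(ExD, ExN, ExZ).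
  by field.
have ES1 := @Esq C N rho dens c _ _ sx1 sx2.
rewrite -/P -/M in ES1.
have p2 : 1 <= p ^+ 2 by exact: exprn_ege1.
have Xge0 : 0 <= Ix ^+ 2 + 4 * m ^+ 2.
  apply: addr_ge0; first by rewrite -realEsqr.
  by apply: mulr_ge0; [rewrite ler0n | rewrite -realEsqr].
have p2' : 0 <= 1 + p ^+ 2 by apply: addr_ge0 => //; exact: le_trans ler01 p2.
apply: sq_le => //.
  by apply: mulr_ge0 => //; rewrite ler0n.
rewrite -EZ; apply: le_trans K _.
rewrite ES1 EZ /G1 /G2 mulmx0 Ex0 addr0 -scalemxAl -scalemxAr sg !ExZ (@Ex1 C N rho dens).
rewrite le_eqVlt; apply/orP; left; apply/eqP; rewrite /c /t; field.
exact: p0.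
Qed.

Lemma i2_bound (p : C) (p1 : 1 <= p) :
  (Iv p) ^+ 2 + 4 * (E (a2 *m g)) ^+ 2 <= 4 * (1 + p ^+ 2).
Proof.
have pr : p \is Num.real by exact: ger1_real.
have p0 : p != 0 by rewrite gt_eqF // (lt_le_trans ltr01 p1).
have Ixr : Iv p \is Num.real by apply: Ival_real; cmt.
have mr : E (a2 *m g) \is Num.real.
  by apply: (@Ex_real C N rho dens); rewrite adjmxM hg ha2.
set Ix := Iv p; set m := E (a2 *m g).
set c := Ix.
set P := c *: (x1 + x2); set M := c *: (x1 - x2).
set t := 4 * m.
have tr : t \is Num.real by rewrite /t; realt2 pr; exact: mr.
set G1 := (0 : 'M[C]_N); set G2 := t *: g.
have hP : adjmx P = P by apply: hermZ => //; apply: hermD => //; apply: hermN.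
have hM : adjmx M = M by apply: hermZ => //; apply: hermD => //; apply: hermN.
have hG1 : adjmx G1 = G1 by apply: herm0.
have hG2 : adjmx G2 = G2 by apply: hermZ.
have K := @key_ineq C N rho dens a1 a2 P M G1 G2 ha1 ha2 hP hM hG1 hG2 sa1 sa2
  ltac:(cmt) ltac:(cmt) ltac:(cmt) ltac:(cmt) ltac:(cmt) ltac:(cmt) ltac:(cmt) ltac:(cmt)
  (@anti C N c _ _ sx1 sx2) (@anti0l C N G2) ltac:(cmt) ltac:(cmt) ltac:(cmt) ltac:(cmt) p p1.
have EZ : E (p *: (a1 *m (P + G1)) + a2 *m (M + G2)) = Ix ^+ 2 + 4 * m ^+ 2.
  rewrite /P /M /G1 /G2 /c /t /Ix /m /Ival addr0.
  rewrite !(mulmxDr, mulmxN, ExD, ExN, ExZ, scalerDr, scalerN) -!scalemxAr !(ExD, ExN, ExZ).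
  by field.
have ES1 := @Esq C N rho dens c _ _ sx1 sx2.
rewrite -/P -/M in ES1.
have p2 : 1 <= p ^+ 2 by exact: exprn_ege1.
have Xge0 : 0 <= Ix ^+ 2 + 4 * m ^+ 2.
  apply: addr_ge0; first by rewrite -realEsqr.
  by apply: mulr_ge0; [rewrite ler0n | rewrite -realEsqr].
have p2' : 0 <= 1 + p ^+ 2 by apply: addr_ge0 => //; exact: le_trans ler01 p2.
apply: sq_le => //.
  by apply: mulr_ge0 => //; rewrite ler0n.
rewrite -EZ; apply: le_trans K _.
rewrite ES1 EZ /G1 /G2 mulmx0 Ex0 mulr0 add0r -scalemxAl -scalemxAr sg !ExZ (@Ex1 C N rho dens).
rewrite le_eqVlt; apply/orP; left; apply/eqP; rewrite /c /t; ring.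
Qed.

End Ibound.

Section Emb.
Variable C : numClosedFieldType.
Variables dA dB dC : nat.
Definition aE (X : 'M[C]_dA) : 'M[C]_(dA * dB * dC) := (X *t (1%:M : 'M_dB)) *t (1%:M : 'M_dC).
Definition bE (Y : 'M[C]_dB) : 'M[C]_(dA * dB * dC) := ((1%:M : 'M_dA) *t Y) *t (1%:M : 'M_dC).
Definition cE (Z : 'M[C]_dC) : 'M[C]_(dA * dB * dC) := ((1%:M : 'M_dA) *t (1%:M : 'M_dB)) *t Z.

Lemma aE_mul X X' : aE X *m aE X' = aE (X *m X').
Proof. by rewrite /aE !tensmx_mul !mulmx1. Qed.
Lemma bE_mul X X' : bE X *m bE X' = bE (X *m X').
Proof. by rewrite /bE !tensmx_mul !mulmx1. Qed.
Lemma cE_mul X X' : cE X *m cE X' = cE (X *m X').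
Proof. by rewrite /cE !tensmx_mul !mulmx1. Qed.
Lemma aE1 : aE 1%:M = 1%:M.
Proof. by rewrite /aE !tens11. Qed.
Lemma bE1 : bE 1%:M = 1%:M.
Proof. by rewrite /bE !tens11. Qed.
Lemma cE1 : cE 1%:M = 1%:M.
Proof. by rewrite /cE !tens11. Qed.
Lemma aE_adj X : adjmx (aE X) = aE (adjmx X).
Proof. by rewrite /aE !adjmx_tens !adjmx1. Qed.
Lemma bE_adj X : adjmx (bE X) = bE (adjmx X).
Proof. by rewrite /bE !adjmx_tens !adjmx1. Qed.
Lemma cE_adj X : adjmx (cE X) = cE (adjmx X).
Proof. by rewrite /cE !adjmx_tens !adjmx1. Qed.
Lemma ab_cm X Y : bE Y *m aE X = aE X *m bE Y.
Proof. by rewrite /aE /bE !tensmx_mul !mulmx1 !mul1mx. Qed.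
Lemma ac_cm X Z : cE Z *m aE X = aE X *m cE Z.
Proof. by rewrite /aE /cE !tensmx_mul !mulmx1 !mul1mx. Qed.
Lemma bc_cm Y Z : cE Z *m bE Y = bE Y *m cE Z.
Proof. by rewrite /bE /cE !tensmx_mul !mulmx1 !mul1mx. Qed.
Lemma corrABE (rho : 'M[C]_(dA * dB * dC)) X Y : corrAB rho X Y = @Ex C _ rho (aE X *m bE Y).
Proof. by rewrite /corrAB /Ex /aE /bE !tensmx_mul !mulmx1 !mul1mx. Qed.
Lemma corrACE (rho : 'M[C]_(dA * dB * dC)) X Z : corrAC rho X Z = @Ex C _ rho (aE X *m cE Z).
Proof. by rewrite /corrAC /Ex /aE /cE !tensmx_mul !mulmx1 !mul1mx. Qed.
End Emb.

Theorem theorem3 (C : numClosedFieldType) (dA dB dC : nat)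
  (rho : 'M[C]_(dA * dB * dC))
  (A1 A2 : 'M[C]_dA) (B1 B2 : 'M[C]_dB) (C1 C2 : 'M[C]_dC) (alpha : C) :
  density rho ->
  dichotomic A1 -> dichotomic A2 ->
  dichotomic B1 -> dichotomic B2 ->
  dichotomic C1 -> dichotomic C2 ->
  1 <= alpha ->
  let IAB := Itilde alpha (corrAB rho A1 B1) (corrAB rho A1 B2)
                          (corrAB rho A2 B1) (corrAB rho A2 B2) in
  let IAC := Itilde alpha (corrAC (dB:=dB) rho A1 C1) (corrAC (dB:=dB) rho A1 C2)
                          (corrAC (dB:=dB) rho A2 C1) (corrAC (dB:=dB) rho A2 C2) in
  alpha ^+ 2 * Num.max (IAB ^+ 2) (IAC ^+ 2) + Num.min (IAB ^+ 2) (IAC ^+ 2)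
    <= 4 * alpha ^+ 2 * (1 + alpha ^+ 2)
  /\ (forall (X : 'M[C]_dA) (Z : 'M[C]_dC),
        (X = A1 \/ X = A2) -> (Z = C1 \/ Z = C2) ->
        IAB ^+ 2 + 4 * (corrAC (dB:=dB) rho X Z) ^+ 2 <= 4 * (1 + alpha ^+ 2)).
Proof.
move=> dens dA1 dA2 dB1 dB2 dC1 dC2 al1 IAB IAC.
have hA1 := dA1.1; have hA2 := dA2.1; have hB1 := dB1.1; have hB2 := dB2.1.
have hC1 := dC1.1; have hC2 := dC2.1.
have sA1 := @dichotomic_sq C _ _ dA1; have sA2 := @dichotomic_sq C _ _ dA2.
have sB1 := @dichotomic_sq C _ _ dB1; have sB2 := @dichotomic_sq C _ _ dB2.
have sC1 := @dichotomic_sq C _ _ dC1; have sC2 := @dichotomic_sq C _ _ dC2.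
set a1 := @aE C dA dB dC A1; set a2 := @aE C dA dB dC A2.
set b1 := @bE C dA dB dC B1; set b2 := @bE C dA dB dC B2.
set c1 := @cE C dA dB dC C1; set c2 := @cE C dA dB dC C2.
have ha1 : adjmx a1 = a1 by rewrite /a1 aE_adj hA1.
have ha2 : adjmx a2 = a2 by rewrite /a2 aE_adj hA2.
have hb1 : adjmx b1 = b1 by rewrite /b1 bE_adj hB1.
have hb2 : adjmx b2 = b2 by rewrite /b2 bE_adj hB2.
have hc1 : adjmx c1 = c1 by rewrite /c1 cE_adj hC1.
have hc2 : adjmx c2 = c2 by rewrite /c2 cE_adj hC2.
have sa1 : a1 *m a1 = 1%:M by rewrite /a1 aE_mul sA1 aE1.
have sa2 : a2 *m a2 = 1%:M by rewrite /a2 aE_mul sA2 aE1.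
have sb1 : b1 *m b1 = 1%:M by rewrite /b1 bE_mul sB1 bE1.
have sb2 : b2 *m b2 = 1%:M by rewrite /b2 bE_mul sB2 bE1.
have sc1 : c1 *m c1 = 1%:M by rewrite /c1 cE_mul sC1 cE1.
have sc2 : c2 *m c2 = 1%:M by rewrite /c2 cE_mul sC2 cE1.
have EAB : IAB = @Ival C _ rho a1 a2 alpha b1 b2 by rewrite /IAB /Itilde /Ival !corrABE.
have EAC : IAC = @Ival C _ rho a1 a2 alpha c1 c2 by rewrite /IAC /Itilde /Ival !corrACE.
have g1 := @gen_bound C _ rho dens a1 a2 b1 b2 c1 c2 ha1 ha2 hb1 hb2 hc1 hc2
  sa1 sa2 sb1 sb2 sc1 sc2 (@ab_cm _ _ _ _ _ _) (@ab_cm _ _ _ _ _ _) (@ab_cm _ _ _ _ _ _) (@ab_cm _ _ _ _ _ _)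
  (@ac_cm _ _ _ _ _ _) (@ac_cm _ _ _ _ _ _) (@ac_cm _ _ _ _ _ _) (@ac_cm _ _ _ _ _ _)
  (@bc_cm _ _ _ _ _ _) (@bc_cm _ _ _ _ _ _) (@bc_cm _ _ _ _ _ _) (@bc_cm _ _ _ _ _ _) alpha al1.
have g2 := @gen_bound C _ rho dens a1 a2 c1 c2 b1 b2 ha1 ha2 hc1 hc2 hb1 hb2
  sa1 sa2 sc1 sc2 sb1 sb2 (@ac_cm _ _ _ _ _ _) (@ac_cm _ _ _ _ _ _) (@ac_cm _ _ _ _ _ _) (@ac_cm _ _ _ _ _ _)
  (@ab_cm _ _ _ _ _ _) (@ab_cm _ _ _ _ _ _) (@ab_cm _ _ _ _ _ _) (@ab_cm _ _ _ _ _ _)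
  (esym (@bc_cm _ _ _ _ _ _)) (esym (@bc_cm _ _ _ _ _ _)) (esym (@bc_cm _ _ _ _ _ _)) (esym (@bc_cm _ _ _ _ _ _)) alpha al1.
rewrite -EAB -EAC in g1 g2.
split.
  rewrite /Num.max /Num.min /Order.max /Order.min.
  by case: ifP => _; [exact: g2 | exact: g1].
move=> X Z hX hZ.
rewrite EAB corrACE.
have hg : adjmx (@cE C dA dB dC Z) = @cE C dA dB dC Z.
  by rewrite cE_adj; case: hZ => ->; rewrite ?hC1 ?hC2.
have sg : @cE C dA dB dC Z *m @cE C dA dB dC Z = 1%:M.
  by rewrite cE_mul; case: hZ => ->; rewrite ?sC1 ?sC2 cE1.
case: hX => ->.
  exact: (@i1_bound C _ rho dens a1 a2 b1 b2 (@cE C dA dB dC Z) ha1 ha2 hb1 hb2 hg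
    sa1 sa2 sb1 sb2 sg (@ab_cm _ _ _ _ _ _) (@ab_cm _ _ _ _ _ _) (@ab_cm _ _ _ _ _ _) (@ab_cm _ _ _ _ _ _)
    (@ac_cm _ _ _ _ _ _) (@ac_cm _ _ _ _ _ _) (@bc_cm _ _ _ _ _ _) (@bc_cm _ _ _ _ _ _) alpha al1).
exact: (@i2_bound C _ rho dens a1 a2 b1 b2 (@cE C dA dB dC Z) ha1 ha2 hb1 hb2 hg
    sa1 sa2 sb1 sb2 sg (@ab_cm _ _ _ _ _ _) (@ab_cm _ _ _ _ _ _) (@ab_cm _ _ _ _ _ _) (@ab_cm _ _ _ _ _ _)
    (@ac_cm _ _ _ _ _ _) (@ac_cm _ _ _ _ _ _) (@bc_cm _ _ _ _ _ _) (@bc_cm _ _ _ _ _ _) alpha al1).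
Qed.
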